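(* Let $U_1,U_2,U_3,U_4$ be subspaces of a vector space $V$. If for each $j\in\{3,4\}$ we have $U_1\cap U_2\subseteq U_j$ and $U_j=U_j\cap U_1+U_j\cap U_2$, then $$U_3\cap U_4=U_3\cap U_4\cap U_1+U_3\cap U_4\cap U_2.$$ *)

(* Defs.v *)
From mathcomp Require Import all_boot all_algebra.
Set Implicit Arguments. Unset Strict Implicit. Unset Printing Implicit Defensive.
Import GRing.Theory.
Local Open Scope ring_scope.

Definition is_subspace (K : fieldType) (V : lmodType K) (U : V -> Prop) : Prop :=
  [/\ U 0, (forall u w, U u -> U w -> U (u + w))
     & (forall (a : K) u, U u -> U (a *: u))].

Definition sp_cap (V : Type) (A B : V -> Prop) : V -> Prop := fun v => A v /\ B v.

Definition sp_add (K : fieldType) (V : lmodType K) (A B : V -> Prop) : V -> Prop :=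
  fun v => exists a b, [/\ A a, B b & v = a + b].

Definition sp_sub (V : Type) (A B : V -> Prop) : Prop := forall v, A v -> B v.
Definition sp_eq (V : Type) (A B : V -> Prop) : Prop := forall v, A v <-> B v.

(* Main.v *)
Require Import Defs.
From mathcomp Require Import all_boot all_algebra.
Import GRing.Theory.
Local Open Scope ring_scope.

Lemma sub_opp (K : fieldType) (V : lmodType K) (U : V -> Prop) x :
  is_subspace U -> U x -> U (- x).
Proof. by case=> _ _ hs hx; rewrite -scaleN1r; apply: hs. Qed.

Lemma sub_sub (K : fieldType) (V : lmodType K) (U : V -> Prop) x y :
  is_subspace U -> U x -> U y -> U (x - y).
Proof. move=> hU hx hy; case: (hU) => _ ha _; apply: ha => //; exact: sub_opp. Qed.

Theorem lemma4p2 (K : fieldType) (V : lmodType K) (U1 U2 U3 U4 : V -> Prop) :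
  is_subspace U1 -> is_subspace U2 -> is_subspace U3 -> is_subspace U4 ->
  sp_sub (sp_cap U1 U2) U3 ->
  sp_eq U3 (sp_add (sp_cap U3 U1) (sp_cap U3 U2)) ->
  sp_sub (sp_cap U1 U2) U4 ->
  sp_eq U4 (sp_add (sp_cap U4 U1) (sp_cap U4 U2)) ->
  sp_eq (sp_cap U3 U4)
        (sp_add (sp_cap (sp_cap U3 U4) U1) (sp_cap (sp_cap U3 U4) U2)).
Proof.
move=> h1 h2 h3 h4 s3 e3 s4 e4 v; split.
- case=> v3 v4.
  have [a3 [b3 [[a3U3 a3U1] [b3U3 b3U2] E3]]] := (e3 v).1 v3.
  have [a4 [b4 [[a4U4 a4U1] [b4U4 b4U2] E]]] := (e4 _).1 v4.
  have d12 : sp_cap U1 U2 (a3 - a4).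
    split; first exact: sub_sub.
    have -> : a3 - a4 = b4 - b3.
      by apply: (addIr b3); rewrite subrK addrAC -E3 E [a4 + b4]addrC addrK.
    exact: sub_sub.
  have a3U4 : U4 a3.
    have -> : a3 = (a3 - a4) + a4 by rewrite subrK.
    by case: h4 => _ ha _; apply: ha => //; apply: s4.
  exists a3, b3; split => //; split => //; split => //.
  have -> : b3 = v - a3 by rewrite E3 addrC addKr.
  exact: sub_sub.
- case=> a [b [[[a3 a4] _] [[b3 b4] _] ->]].
  by split; [case: h3 => _ ha _ | case: h4 => _ ha _]; apply: ha.
Qed.
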